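(* Let $\tau:\mathcal{D}_{\mathbf{V}_L}\to\mathcal{D}_{\mathbf{V}_H}$ be a constructive abstraction function over clusterings $\mathbb{C}$ and $\mathbb{D}$. For every intervention $\mathbf{X}_H\leftarrow\mathbf{x}_H$ with $\mathbf{X}_H\subseteq\mathbf{V}_H$ and $\mathbf{x}_H\in\mathcal{D}_{\mathbf{X}_H}$, there exist $\mathbf{X}_L$ that is a union of clusters of $\mathbb{C}$ and a value $\mathbf{x}_L\in\mathcal{D}_{\mathbf{X}_L}$ such that $\omega_\tau(\mathbf{X}_L\leftarrow\mathbf{x}_L)=(\mathbf{X}_H\leftarrow\mathbf{x}_H)$.
   Context: $\mathcal{D}_{\mathbf{X}}$ denotes the (Cartesian product) domain of a set of variables $\mathbf{X}$. An intervariable clustering of $\mathbf{V}_L$ is a set $\mathbb{C}=\{\mathbf{C}_1,\dots,\mathbf{C}_n\}$ forming a partition of a subset of $\mathbf{V}_L$; an intravariable clustering is $\mathbb{D}=\{\mathbb{D}_{\mathbf{C}_i}\}$ where $\mathbb{D}_{\mathbf{C}_i}=\{\mathcal{D}^1_{\mathbf{C}_i},\dots,\mathcal{D}^{m_i}_{\mathbf{C}_i}\}$ is a partition of $\mathcal{D}_{\mathbf{C}_i}$. A constructive abstraction function w.r.t. $\mathbb{C},\mathbb{D}$: $\mathbf{V}_H=\{V_{H,1},\dots,V_{H,n}\}$ in bijection with $\mathbb{C}$, $\mathcal{D}_{V_{H,i}}=\{v^1_{H,i},\dots,v^{m_i}_{H,i}\}$ in bijection with $\mathbb{D}_{\mathbf{C}_i}$,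 and $\tau(\mathbf{v}_L)=(\tau_{\mathbf{C}_i}(\mathbf{c}_i):\mathbf{C}_i\in\mathbb{C})$ with $\tau_{\mathbf{C}_i}(\mathbf{c}_i)=v^j_{H,i}$ iff $\mathbf{c}_i\in\mathcal{D}^j_{\mathbf{C}_i}$; for a union of clusters $\mathbf{W}_L$, $\tau(\mathbf{w}_L)=(\tau_{\mathbf{C}_i}(\mathbf{c}_i):\mathbf{C}_i\subseteq\mathbf{W}_L)$. For a set of variables $\mathbf{V}$ and a value $\mathbf{x}$ of $\mathbf{X}\subseteq\mathbf{V}$, $\mathrm{Rst}(\mathbf{V},\mathbf{x})=\{\mathbf{v}\in\mathcal{D}_{\mathbf{V}}:\mathbf{v}\text{ is consistent with }\mathbf{x}\}$; for $\mathbf{T}\subseteq\mathcal{D}_{\mathbf{V}_L}$, $\tau(\mathbf{T})=\{\tau(\mathbf{v}):\mathbf{v}\in\mathbf{T}\}$. The map $\omega_\tau$ is defined by $\omega_\tau(\mathbf{X}_L\leftarrow\mathbf{x}_L)=(\mathbf{X}_H\leftarrow\mathbf{x}_H)$ whenever $\tau(\mathrm{Rst}(\mathbf{V}_L,\mathbf{x}_L))=\mathrm{Rst}(\mathbf{V}_H,\mathbf{x}_H)$. *)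

(* Defs.v *)
From mathcomp Require Import all_boot.
Set Implicit Arguments. Unset Strict Implicit. Unset Printing Implicit Defensive.

Definition asg (V : finType) (Dom : V -> Type) (X : {set V}) : Type :=
  forall v : V, v \in X -> Dom v.

Definition full (V : finType) (Dom : V -> Type) : Type := forall v : V, Dom v.

(* membership of v in Rst(V, x): v is consistent with x *)
Definition consistent (V : finType) (Dom : V -> Type) (X : {set V})
  (x : asg Dom X) (f : full Dom) : Prop :=
  forall (v : V) (h : v \in X), f v = x v h.

Definition restr (V : finType) (Dom : V -> Type) (X : {set V}) (f : full Dom)
  : asg Dom X := fun v _ => f v.

Definition intervariable_clustering (V : finType) (n : nat) (C : 'I_n -> {set V})
  : Prop :=
  (forall i, C i != set0) /\ (forall i j, i != j -> [disjoint C i & C j]).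

Definition is_partition (T : Type) (m : nat) (B : 'I_m -> T -> Prop) : Prop :=
  [/\ (forall j, exists t, B j t),
      (forall t, exists j, B j t) &
      (forall j j' t, B j t -> B j' t -> j = j')].

(* Constructive abstraction: V_H = 'I_n (V_{H,i} <-> C_i), D_{V_{H,i}} = 'I_(m i)
   (v^j_{H,i} <-> block B i j), and tau_{C_i}(c) = j iff c is in block B i j. *)
Definition constructive_components (V : finType) (Dom : V -> Type) (n : nat)
  (C : 'I_n -> {set V}) (m : 'I_n -> nat)
  (B : forall i, 'I_(m i) -> asg Dom (C i) -> Prop)
  (tauC : forall i, asg Dom (C i) -> 'I_(m i)) : Prop :=
  forall i c j, tauC i c = j <-> B i j c.

Definition HDom (n : nat) (m : 'I_n -> nat) : 'I_n -> Type := fun i => 'I_(m i).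

Definition tau (V : finType) (Dom : V -> Type) (n : nat)
  (C : 'I_n -> {set V}) (m : 'I_n -> nat)
  (tauC : forall i, asg Dom (C i) -> 'I_(m i)) (f : full Dom) : full (HDom m) :=
  fun i => tauC i (@restr V Dom (C i) f).

Definition omega_maps (V : finType) (Dom : V -> Type) (n : nat)
  (C : 'I_n -> {set V}) (m : 'I_n -> nat)
  (tauC : forall i, asg Dom (C i) -> 'I_(m i))
  (XL : {set V}) (xL : asg Dom XL) (XH : {set 'I_n}) (xH : asg (HDom m) XH) : Prop :=
  forall h : full (HDom m),
    (exists f : full Dom, consistent xL f /\ @tau V Dom n C m tauC f = h) <-> consistent xH h.

(* Main.v *)
Require Import Defs.
From mathcomp Require Import all_boot.
From Stdlib Require Import ClassicalEpsilon FunctionalExtensionality.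

Definition dsel (b : bool) (T : Type) (f : b = true -> T) (d : T) : T :=
  (match b as c return (b = c -> T) with true => f | false => fun _ => d end) erefl.
Lemma dselE (b : bool) (T : Type) (f : b = true -> T) (d : T) (p : b = true) :
  @dsel b T f d = f p.
Proof. rewrite /dsel. move: p f; case: b => p f //. by rewrite (eq_irrelevance p erefl). Qed.

Section Aux.
Variables (V : finType) (Dom : V -> Type) (def : full Dom).

Definition ext (X : {set V}) (x : asg Dom X) : full Dom := fun v =>
  @dsel (v \in X) (Dom v) (x v) (def v).

Lemma extE X (x : asg Dom X) v (hv : v \in X) : @ext X x v = x v hv.
Proof. exact: dselE. Qed.

Lemma asg_ext X (x y : asg Dom X) : (forall v h, x v h = y v h) -> x = y.
Proof.
move=> H; apply: functional_extensionality_dep => v.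
by apply: functional_extensionality_dep => h.
Qed.
End Aux.

Theorem lemma4 (V : finType) (Dom : V -> Type) (n : nat)
  (C : 'I_n -> {set V}) (m : 'I_n -> nat)
  (B : forall i, 'I_(m i) -> asg Dom (C i) -> Prop)
  (tauC : forall i, asg Dom (C i) -> 'I_(m i)) :
  (forall v, inhabited (Dom v)) ->
  intervariable_clustering C ->
  (forall i, is_partition (B i)) ->
  @constructive_components V Dom n C m B tauC ->
  forall (XH : {set 'I_n}) (xH : asg (HDom m) XH),
  exists (S : {set 'I_n}) (xL : asg Dom (\bigcup_(i in S) C i)),
    @omega_maps V Dom n C m tauC (\bigcup_(i in S) C i) xL XH xH.
Proof.
move=> inh [_ disj] part cc XH xH.
have def : full Dom.
  move=> v; apply: (proj1_sig (constructive_indefinite_description (fun _ : Dom v => True) _)).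
  by case: (inh v) => x; exists x.
have dex : forall i j, {t | B i j t}.
  move=> i j; apply: constructive_indefinite_description.
  by case: (part i) => H _ _; apply: H.
pose d i j := proj1_sig (dex i j).
have dB : forall i j, tauC i (d i j) = j by move=> i j; apply/cc; exact: proj2_sig (dex i j).
pose g (k : forall i, option 'I_(m i)) : full Dom := fun v =>
  match [pick i | v \in C i] with
  | Some i => match k i with Some j => @ext V Dom def (C i) (d i j) v | None => def v end
  | None => def v end.
have gE : forall k i v (hv : v \in C i),
    g k v = match k i with Some j => d i j v hv | None => def v end.
  move=> k i v hv; rewrite /g; case: pickP => [i' Hi'|H]; last by move: (H i); rewrite hv.
  have -> : i' = i.
    apply/eqP; apply/negPn/negP => ne.
    by rewrite (disjointFr (disj _ _ ne) Hi') in hv.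
  by case: (k i) => // j; rewrite (@extE V Dom def (C i) (d i j) v hv).
pose kx i : option 'I_(m i) := @dsel (i \in XH) _ (fun p => Some (xH i p)) None.
have kxE : forall i (p : i \in XH), kx i = Some (xH i p).
  by move=> i p; rewrite /kx (@dselE _ _ _ _ p).
exists XH, (restr (g kx)) => h; split.
- move=> [f [cf <-]] i p.
  rewrite /tau -(dB i (xH i p)); congr (tauC i).
  apply: asg_ext => v hv.
  have hv' : v \in \bigcup_(i0 in XH) C i0 by apply/bigcupP; exists i.
  by rewrite /restr (cf v hv') /restr (gE _ _ _ hv) (kxE _ p).
- move=> ch.
  exists (g (fun i => Some (h i))); split.
  + move=> v hv; case/bigcupP: (hv) => i p hvi.
    by rewrite /restr !(gE _ _ _ hvi) (kxE _ p) (ch i p).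
  + apply: functional_extensionality_dep => i.
    rewrite /tau -(dB i (h i)); congr (tauC i).
    by apply: asg_ext => v hv; rewrite /restr (gE _ _ _ hv).
Qed.
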